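(* Let $X_1,\dots,X_n\in\mathbb{R}$, $Y\in\mathbb{R}^n$ and $\lambda\ge 0$. The univariate LISO problem $$\min_{\theta\in\mathcal{M}}\ \tfrac12\|Y-\theta\|^2+\lambda\big(\max_i\theta_i-\min_i\theta_i\big)$$ has a unique solution $\hat\theta_\lambda$, and there exist thresholds $A_\lambda\le B_\lambda$ (with $A_\lambda,B_\lambda\in[-\infty,\infty]$) such that $\hat\theta_\lambda=\hat\theta^{>A_\lambda,<B_\lambda}$, i.e. $(\hat\theta_\lambda)_i=\min\{B_\lambda,\max\{A_\lambda,\hat\theta^{\mathrm{PAVA}}_i\}\}$ for all $i$.
   Context: $\mathcal{M}$ denotes the set of vectors $\theta\in\mathbb{R}^n$ that are monotone in $X$: $\theta_i\le\theta_j$ whenever $X_i<X_j$, and $\theta_i=\theta_j$ whenever $X_i=X_j$. The PAVA fit $\hat\theta^{\mathrm{PAVA}}$ is the unique minimiser of $\|Y-\theta\|^2$ over $\theta\in\mathcal{M}$. For $A\le B$, the Winsorized PAVA vector $\hat\theta^{>A,<B}$ is obtained by replacing entries of $\hat\theta^{\mathrm{PAVA}}$ below $A$ by $A$ and entries above $B$ by $B$. *)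

(* Defs.v *)
From Stdlib Require Import Reals List.
Import ListNotations.
Open Scope R_scope.

(* Vectors in R^n are represented as functions nat -> R, of which only the
   coordinates 0..n-1 are relevant. *)

Definition sumR (n : nat) (f : nat -> R) : R :=
  fold_right Rplus 0 (map f (seq 0 n)).

(* max_i theta_i and min_i theta_i over i < n (meaningful for n >= 1). *)
Definition maxv (n : nat) (theta : nat -> R) : R :=
  fold_right Rmax (theta 0%nat) (map theta (seq 0 n)).
Definition minv (n : nat) (theta : nat -> R) : R :=
  fold_right Rmin (theta 0%nat) (map theta (seq 0 n)).

Definition monotone_in (n : nat) (X theta : nat -> R) : Prop :=
  forall i j, (i < n)%nat -> (j < n)%nat ->
    (X i < X j -> theta i <= theta j) /\ (X i = X j -> theta i = theta j).

Definition sqnorm_diff (n : nat) (Y theta : nat -> R) : R :=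
  sumR n (fun i => (Y i - theta i) ^ 2).

Definition is_pava (n : nat) (X Y theta : nat -> R) : Prop :=
  monotone_in n X theta /\
  forall theta', monotone_in n X theta' ->
    sqnorm_diff n Y theta <= sqnorm_diff n Y theta'.

Definition liso_obj (n : nat) (lam : R) (Y theta : nat -> R) : R :=
  / 2 * sqnorm_diff n Y theta + lam * (maxv n theta - minv n theta).

Definition is_liso_sol (n : nat) (lam : R) (X Y theta : nat -> R) : Prop :=
  monotone_in n X theta /\
  forall theta', monotone_in n X theta' ->
    liso_obj n lam Y theta <= liso_obj n lam Y theta'.

(* Extended reals for thresholds: None on the lower side means -infinity,
   None on the upper side means +infinity. *)
Definition lower_clip (A : option R) (x : R) : R :=
  match A with None => x | Some a => Rmax a x end.
Definition upper_clip (B : option R) (x : R) : R :=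
  match B with None => x | Some b => Rmin b x end.

Definition thr_le (A B : option R) : Prop :=
  match A, B with Some a, Some b => a <= b | _, _ => True end.

Definition winsorize (A B : option R) (theta : nat -> R) : nat -> R :=
  fun i => upper_clip B (lower_clip A (theta i)).

(* Main.v *)
Require Import Defs.
From Stdlib Require Import Reals List Lra Lia Psatz.
From Stdlib Require Import FunctionalExtensionality.
Import ListNotations.
Open Scope R_scope.

Lemma fr_plus a l : fold_right Rplus a l = fold_right Rplus 0 l + a.
Proof. induction l; simpl; [lra| rewrite IHl; lra]. Qed.

Lemma sumR_S n f : sumR (S n) f = sumR n f + f n.
Proof.
  unfold sumR. rewrite seq_S, map_app, fold_right_app. simpl.
  rewrite fr_plus. lra.
Qed.

Lemma sumR_0 f : sumR 0 f = 0.
Proof. reflexivity. Qed.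

Lemma sumR_ext n f g : (forall i, (i < n)%nat -> f i = g i) -> sumR n f = sumR n g.
Proof.
  induction n; intros H; [reflexivity|]. rewrite !sumR_S, IHn, H; auto; intros; apply H; lia.
Qed.

Lemma sumR_le n f g : (forall i, (i < n)%nat -> f i <= g i) -> sumR n f <= sumR n g.
Proof.
  induction n; intros H; [rewrite !sumR_0; lra|]. rewrite !sumR_S.
  assert (sumR n f <= sumR n g) by (apply IHn; intros; apply H; lia).
  specialize (H n ltac:(lia)). lra.
Qed.

Lemma sumR_lin2 n a b f g :
  sumR n (fun i => a * f i + b * g i) = a * sumR n f + b * sumR n g.
Proof. induction n; [rewrite !sumR_0; lra|]. rewrite !sumR_S, IHn. lra. Qed.

Lemma sumR_lin3 n a b c f g h :
  sumR n (fun i => a * f i + b * g i + c * h i) = a * sumR n f + b * sumR n g + c * sumR n h.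
Proof. induction n; [rewrite !sumR_0; lra|]. rewrite !sumR_S, IHn. lra. Qed.

Lemma sumR_const n c : sumR n (fun _ => c) = INR n * c.
Proof. induction n; [rewrite sumR_0; simpl; lra|]. rewrite sumR_S, IHn, S_INR. lra. Qed.

Lemma sumR_term n f i : (forall j, (j < n)%nat -> 0 <= f j) -> (i < n)%nat -> f i <= sumR n f.
Proof.
  induction n; intros H Hi; [lia|]. rewrite sumR_S.
  assert (0 <= sumR n f).
  { replace 0 with (sumR n (fun _ => 0)) by (rewrite sumR_const; lra).
    apply sumR_le; intros; apply H; lia. }
  destruct (Nat.eq_dec i n). subst; lra.
  assert (f i <= sumR n f) by (apply IHn; [intros; apply H; lia | lia]).
  specialize (H n ltac:(lia)); lra.
Qed.

Lemma fmax_ge d l x : In x l -> x <= fold_right Rmax d l.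
Proof. induction l; simpl; [tauto|]. intros [<-|H]; [apply Rmax_l|].
  eapply Rle_trans; [apply IHl; auto| apply Rmax_r]. Qed.
Lemma fmax_d d l : d <= fold_right Rmax d l.
Proof. induction l; simpl; [lra|]. eapply Rle_trans; [apply IHl| apply Rmax_r]. Qed.
Lemma fmax_lub d l b : d <= b -> (forall x, In x l -> x <= b) -> fold_right Rmax d l <= b.
Proof. induction l; simpl; intros; auto. apply Rmax_lub; auto. Qed.
Lemma fmin_le d l x : In x l -> fold_right Rmin d l <= x.
Proof. induction l; simpl; [tauto|]. intros [<-|H]; [apply Rmin_l|].
  eapply Rle_trans; [apply Rmin_r| apply IHl; auto]. Qed.
Lemma fmin_d d l : fold_right Rmin d l <= d.
Proof. induction l; simpl; [lra|]. eapply Rle_trans; [apply Rmin_r| apply IHl]. Qed.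
Lemma fmin_glb d l b : b <= d -> (forall x, In x l -> b <= x) -> b <= fold_right Rmin d l.
Proof. induction l; simpl; intros; auto. apply Rmin_glb; auto. Qed.

Lemma in_mapseq n (f : nat -> R) i : (i < n)%nat -> In (f i) (map f (seq 0 n)).
Proof. intros; apply in_map, in_seq; lia. Qed.

Lemma le_maxv n f i : (i < n)%nat -> f i <= maxv n f.
Proof. intros; apply fmax_ge, in_mapseq; auto. Qed.
Lemma minv_le n f i : (i < n)%nat -> minv n f <= f i.
Proof. intros; apply fmin_le, in_mapseq; auto. Qed.
Lemma minv_maxv n f : minv n f <= maxv n f.
Proof. eapply Rle_trans; [apply fmin_d| apply fmax_d]. Qed.
Lemma maxv_ub n f b : (forall i, f i <= b) -> maxv n f <= b.
Proof. intros H; apply fmax_lub; auto. intros x Hx; apply in_map_iff in Hx as [j [<- _]]; auto. Qed.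
Lemma minv_lb n f b : (forall i, b <= f i) -> b <= minv n f.
Proof. intros H; apply fmin_glb; auto. intros x Hx; apply in_map_iff in Hx as [j [<- _]]; auto. Qed.
Lemma mono_comp n X P (f : R -> R) : monotone_in n X P ->
  (forall x y, x <= y -> f x <= f y) -> monotone_in n X (fun i => f (P i)).
Proof.
  intros HP Hf i j Hi Hj. destruct (HP i j Hi Hj) as [H1 H2]. split.
  - intros; apply Hf; auto.
  - intros E; rewrite (H2 E); reflexivity.
Qed.

Lemma mono_seg n X P T t : monotone_in n X P -> monotone_in n X T -> 0 <= t <= 1 ->
  monotone_in n X (fun i => P i + t * (T i - P i)).
Proof.
  intros HP HT Ht i j Hi Hj. destruct (HP i j Hi Hj) as [H1 H2].
  destruct (HT i j Hi Hj) as [H3 H4]. split.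
  - intros L. specialize (H1 L); specialize (H3 L). nra.
  - intros E. rewrite (H2 E), (H4 E). reflexivity.
Qed.

Lemma VI n X Y P T : is_pava n X Y P -> monotone_in n X T ->
  sumR n (fun i => (Y i - P i) * (T i - P i)) <= 0.
Proof.
  intros [HPm HPo] HT.
  set (I := sumR n (fun i => (Y i - P i) * (T i - P i))).
  set (D := sumR n (fun i => (T i - P i) * (T i - P i))).
  assert (Hexp : forall t, sqnorm_diff n Y (fun i => P i + t * (T i - P i)) =
     sqnorm_diff n Y P + (-2 * t) * I + (t * t) * D).
  { intros t. unfold sqnorm_diff, I, D. rewrite <- (Rmult_1_l (sumR n (fun i => (Y i - P i) ^ 2))).
    rewrite <- sumR_lin3. apply sumR_ext. intros; ring. }
  assert (Ht : forall t, 0 <= t <= 1 -> 0 <= -2 * t * I + t * t * D).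
  { intros t Ht. specialize (HPo _ (mono_seg n X P T t HPm HT Ht)). rewrite Hexp in HPo. lra. }
  assert (HD : 0 <= D).
  { unfold D. replace 0 with (sumR n (fun _ => 0)) by (rewrite sumR_const; lra).
    apply sumR_le; intros; cbv beta; apply Rle_0_sqr. }
  destruct (Rle_dec I 0) as [|Hn]; auto. exfalso.
  destruct (Rle_dec D I) as [HDI|HDI].
  - specialize (Ht 1 ltac:(lra)). lra.
  - set (t := I / D). assert (0 < D) by lra.
    assert (0 < t < 1). { unfold t; split. apply Rdiv_lt_0_compat; lra.
      apply (Rmult_lt_reg_r D); auto. unfold Rdiv; rewrite Rmult_assoc, Rinv_l; lra. }
    specialize (Ht t ltac:(lra)).
    assert (t * D = I) by (unfold t; field; lra).
    nra.
Qed.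

Definition clip (a b x : R) := Rmin b (Rmax a x).

Lemma clip_mono a b x y : x <= y -> clip a b x <= clip a b y.
Proof. unfold clip, Rmin, Rmax; intros; repeat destruct Rle_dec; lra. Qed.
Lemma clip_lip a b x y : a <= b -> x <= y -> clip a b y - clip a b x <= y - x.
Proof. unfold clip, Rmin, Rmax; intros; repeat destruct Rle_dec; lra. Qed.
Lemma clip_rng a b x : a <= b -> a <= clip a b x <= b.
Proof. unfold clip, Rmin, Rmax; intros; repeat destruct Rle_dec; lra. Qed.

Lemma VI_clip n X Y P a b : is_pava n X Y P -> a <= b ->
  sumR n (fun i => (Y i - P i) * (clip a b (P i) - P i)) = 0.
Proof.
  intros HP Hab. assert (Hm := proj1 HP).
  assert (H1 := VI n X Y P (fun i => clip a b (P i)) HP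
                 (mono_comp n X P _ Hm (clip_mono a b))).
  assert (H2 := VI n X Y P (fun i => 2 * P i - clip a b (P i)) HP
                 (mono_comp n X P (fun x => 2 * x - clip a b x) Hm
                   ltac:(intros x y Hxy; pose proof (clip_lip a b x y Hab Hxy); lra))).
  assert (E : sumR n (fun i => (Y i - P i) * (2 * P i - clip a b (P i) - P i)) =
              -1 * sumR n (fun i => (Y i - P i) * (clip a b (P i) - P i)) + 0 * sumR n (fun _ => 0)).
  { rewrite <- sumR_lin2. apply sumR_ext; intros; ring. }
  lra.
Qed.
Lemma pw_ineq a b p th m M : a <= b -> m <= th <= M ->
  (p - clip a b p) * (th - clip a b p) <= Rmax 0 (a - p) * (a - m) + Rmax 0 (p - b) * (M - b).
Proof.
  intros Hab Ht. unfold clip.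
  destruct (Rle_dec p a).
  - rewrite (Rmax_left a p) by lra. rewrite (Rmin_right b a) by lra.
    rewrite (Rmax_right 0 (a - p)) by lra. rewrite (Rmax_left 0 (p - b)) by lra. nra.
  - rewrite (Rmax_right a p) by lra. rewrite (Rmax_left 0 (a - p)) by lra.
    destruct (Rle_dec p b).
    + rewrite (Rmin_right b p) by lra. rewrite (Rmax_left 0 (p - b)) by lra. nra.
    + rewrite (Rmin_left b p) by lra. rewrite (Rmax_right 0 (p - b)) by lra. nra.
Qed.

Lemma key n X Y P lam a b s th :
  is_pava n X Y P -> a <= b -> 0 <= lam -> monotone_in n X th ->
  sumR n (fun i => Rmax 0 (a - P i)) = s -> sumR n (fun i => Rmax 0 (P i - b)) = s ->
  s <= lam -> (s = lam \/ a = b) ->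
  liso_obj n lam Y (fun i => clip a b (P i)) + / 2 * sumR n (fun i => (th i - clip a b (P i)) ^ 2)
  <= liso_obj n lam Y th.
Proof.
  intros HP Hab Hl Hth HL HU Hs Hor.
  set (W := fun i => clip a b (P i)).
  set (J := sumR n (fun i => (Y i - W i) * (th i - W i))).
  set (Q := sumR n (fun i => (th i - W i) ^ 2)).
  assert (E1 : sqnorm_diff n Y th = 1 * sqnorm_diff n Y W + (-2) * J + 1 * Q).
  { unfold sqnorm_diff, J, Q. rewrite <- sumR_lin3. apply sumR_ext; intros; ring. }
  assert (E2 : J = 1 * sumR n (fun i => (Y i - P i) * (th i - P i))
                 + (-1) * sumR n (fun i => (Y i - P i) * (clip a b (P i) - P i))
                 + 1 * sumR n (fun i => (P i - W i) * (th i - W i))).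
  { unfold J. rewrite <- sumR_lin3. apply sumR_ext; intros; unfold W; ring. }
  pose proof (VI n X Y P th HP Hth) as V1.
  rewrite (VI_clip n X Y P a b HP Hab) in E2.
  set (m := minv n th). set (M := maxv n th).
  assert (E3 : sumR n (fun i => (P i - W i) * (th i - W i)) <= (a - m) * s + (M - b) * s).
  { rewrite <- HL at 1. rewrite <- HU.
    replace ((a - m) * sumR n (fun i => Rmax 0 (a - P i)) + (M - b) * sumR n (fun i => Rmax 0 (P i - b)))
      with (sumR n (fun i => Rmax 0 (a - P i) * (a - m) + Rmax 0 (P i - b) * (M - b))).
    2:{ rewrite <- sumR_lin2. apply sumR_ext; intros; ring. }
    apply sumR_le. intros i Hi. unfold W. apply pw_ineq; auto.
    split; [apply minv_le | apply le_maxv]; auto. }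
  assert (HRW : maxv n W - minv n W <= b - a).
  { assert (maxv n W <= b) by (apply maxv_ub; intros; apply clip_rng; auto).
    assert (a <= minv n W) by (apply minv_lb; intros; apply clip_rng; auto). lra. }
  assert (HRt : 0 <= M - m) by (pose proof (minv_maxv n th); unfold M, m; lra).
  change (sumR n (fun i => (th i - clip a b (P i)) ^ 2)) with Q. unfold liso_obj. rewrite E1. fold m M.
  assert (J <= s * (M - m) - s * (b - a)) by lra.
  assert (lam * (maxv n W - minv n W) <= lam * (b - a)) by (apply Rmult_le_compat_l; lra).
  assert (s * (M - m) <= lam * (M - m)) by (apply Rmult_le_compat_r; lra).
  destruct Hor as [->|<-].
  - lra.
  - replace (a - a) with 0 in * by ring. rewrite Rmult_0_r in *. lra.
Qed.
Lemma lip_cont (f : R -> R) : (forall x y, Rabs (f x - f y) <= Rabs (x - y)) -> continuity f.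
Proof.
  intros H x. unfold continuity_pt, continue_in, limit1_in, limit_in.
  intros eps He. exists eps. split; [lra|]. intros y [_ Hy].
  simpl in *. unfold R_dist in *. specialize (H y x). lra.
Qed.

Lemma sum_cont n (F : R -> nat -> R) : (forall i, continuity (fun t => F t i)) ->
  continuity (fun t => sumR n (F t)).
Proof.
  intros H. induction n.
  - apply continuity_const. intros x y; reflexivity.
  - replace (fun t => sumR (S n) (F t)) with (fun t => sumR n (F t) + F t n).
    + exact (continuity_plus (fun t => sumR n (F t)) (fun t => F t n) IHn (H n)).
    + apply functional_extensionality; intros t; rewrite sumR_S; reflexivity.
Qed.

Lemma SL_cont n P : continuity (fun t => sumR n (fun i => Rmax 0 (t - P i))).
Proof.
  apply (sum_cont n (fun t i => Rmax 0 (t - P i))). intros i. apply lip_cont.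
  intros x y; unfold Rmax, Rabs; repeat destruct Rle_dec; repeat destruct Rcase_abs; lra.
Qed.
Lemma SU_cont n P : continuity (fun t => sumR n (fun i => Rmax 0 (P i - t))).
Proof.
  apply (sum_cont n (fun t i => Rmax 0 (P i - t))). intros i. apply lip_cont.
  intros x y; unfold Rmax, Rabs; repeat destruct Rle_dec; repeat destruct Rcase_abs; lra.
Qed.

Lemma mean_exists n P : exists c,
  sumR n (fun i => Rmax 0 (c - P i)) = sumR n (fun i => Rmax 0 (P i - c)).
Proof.
  destruct n as [|n]. { exists 0. reflexivity. }
  exists (sumR (S n) P / INR (S n)).
  set (c := sumR (S n) P / INR (S n)).
  assert (E : sumR (S n) (fun i => Rmax 0 (c - P i)) =
     1 * sumR (S n) (fun i => Rmax 0 (P i - c)) + 1 * sumR (S n) (fun i => c - P i)).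
  { rewrite <- sumR_lin2. apply sumR_ext; intros. unfold Rmax; repeat destruct Rle_dec; lra. }
  assert (E2 : sumR (S n) (fun i => c - P i) = 1 * sumR (S n) (fun _ => c) + (-1) * sumR (S n) P).
  { rewrite <- sumR_lin2. apply sumR_ext; intros; ring. }
  rewrite sumR_const in E2.
  assert (INR (S n) * c = sumR (S n) P).
  { unfold c. field. apply not_0_INR; lia. }
  lra.
Qed.

Lemma thresholds n P lam : 0 <= lam -> exists a b s, a <= b /\
  sumR n (fun i => Rmax 0 (a - P i)) = s /\ sumR n (fun i => Rmax 0 (P i - b)) = s /\
  s <= lam /\ (s = lam \/ a = b).
Proof.
  intros Hl. destruct (mean_exists n P) as [c Hc].
  set (S0 := sumR n (fun i => Rmax 0 (c - P i))).
  destruct (Rle_dec S0 lam) as [Hle|Hgt].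
  { exists c, c, S0. repeat split; auto; lra. }
  set (x := Rmin (minv n P) c). set (y := Rmax (maxv n P) c).
  assert (Hx0 : sumR n (fun i => Rmax 0 (x - P i)) = 0).
  { transitivity (sumR n (fun _ : nat => 0)); [|rewrite sumR_const; lra].
    apply sumR_ext; intros i Hi. apply Rmax_left.
    pose proof (minv_le n P i Hi). pose proof (Rmin_l (minv n P) c). unfold x; lra. }
  assert (Hy0 : sumR n (fun i => Rmax 0 (P i - y)) = 0).
  { transitivity (sumR n (fun _ : nat => 0)); [|rewrite sumR_const; lra].
    apply sumR_ext; intros i Hi. apply Rmax_left.
    pose proof (le_maxv n P i Hi). pose proof (Rmax_l (maxv n P) c). unfold y; lra. }
  destruct (IVT_cor (fun t => sumR n (fun i => Rmax 0 (t - P i)) - lam) x c) as [a [[Ha1 Ha2] Ha]].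
  { apply (continuity_minus _ (fun _ => lam)). apply SL_cont. apply continuity_const; intros u v; reflexivity. }
  { apply Rmin_r. }
  { cbv beta. rewrite Hx0. fold S0. nra. }
  destruct (IVT_cor (fun t => sumR n (fun i => Rmax 0 (P i - t)) - lam) c y) as [b [[Hb1 Hb2] Hb]].
  { apply (continuity_minus _ (fun _ => lam)). apply SU_cont. apply continuity_const; intros u v; reflexivity. }
  { apply Rmax_r. }
  { cbv beta. rewrite Hy0. rewrite <- Hc. fold S0. nra. }
  exists a, b, lam. cbv beta in Ha, Hb. repeat split; try lra.
Qed.

Theorem theorem1 (n : nat) (X Y : nat -> R) (lam : R) (thetaP : nat -> R)
  (Hlam : 0 <= lam) (HP : is_pava n X Y thetaP) :
  exists theta : nat -> R,
    is_liso_sol n lam X Y theta /\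
    (forall theta', is_liso_sol n lam X Y theta' ->
       forall i, (i < n)%nat -> theta' i = theta i) /\
    exists A B : option R, thr_le A B /\
      forall i, (i < n)%nat -> theta i = winsorize A B thetaP i.
Proof.
  destruct (thresholds n thetaP lam Hlam) as [a [b [s [Hab [HL [HU [Hs Hor]]]]]]].
  assert (Hm : monotone_in n X (fun i => clip a b (thetaP i)))
    by (apply mono_comp; [exact (proj1 HP) | apply clip_mono]).
  assert (Hnn : forall th : nat -> R, 0 <= sumR n (fun i => (th i - clip a b (thetaP i)) ^ 2)).
  { intros th. replace 0 with (sumR n (fun _ => 0)) by (rewrite sumR_const; lra).
    apply sumR_le; intros; cbv beta; apply pow2_ge_0. }
  exists (fun i => clip a b (thetaP i)). split; [|split].
  - split; auto. intros th Hth.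
    pose proof (key n X Y thetaP lam a b s th HP Hab Hlam Hth HL HU Hs Hor).
    pose proof (Hnn th). lra.
  - intros th [Hth Ho] i Hi.
    pose proof (key n X Y thetaP lam a b s th HP Hab Hlam Hth HL HU Hs Hor).
    specialize (Ho _ Hm).
    assert (HQ : sumR n (fun i => (th i - clip a b (thetaP i)) ^ 2) <= 0) by lra.
    assert (Hi2 : (th i - clip a b (thetaP i)) ^ 2 <= 0).
    { eapply Rle_trans; [|exact HQ].
      apply (sumR_term n (fun i => (th i - clip a b (thetaP i)) ^ 2)); auto.
      intros; apply pow2_ge_0. }
    nra.
  - exists (Some a), (Some b). split; [exact Hab|]. intros; reflexivity.
Qed.
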